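(* Let $K$ be a field and $\nu$ a valuation on $K[x]$. For all nonconstant $f,g\in K[x]$ we have $\epsilon(fg)=\max\{\epsilon(f),\epsilon(g)\}$.
   Context: $\nu:K[x]\to\Gamma\cup\{\infty\}$ is a valuation ($\Gamma$ an ordered abelian group) with $\nu(f)=\infty$ only for $f=0$; $\Gamma'=\Gamma\otimes\mathbb{Q}$ is the divisible hull. For $k\in\mathbb{N}$, $\partial_kf=\frac{1}{k!}\frac{d^kf}{dx^k}$ is the Hasse derivative. For nonconstant $f$, $\epsilon(f)=\max\{(\nu(f)-\nu(\partial_kf))/k\mid 1\le k\le\deg f,\ \partial_kf\neq0\}\in\Gamma'$. *)

(* Defs.v *)
From mathcomp Require Import all_boot all_order all_algebra.
Set Implicit Arguments. Unset Strict Implicit. Unset Printing Implicit Defensive.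
Import GRing.Theory.
Local Open Scope ring_scope.

Definition ordered_abelian_group (G : zmodType) (le : rel G) : Prop :=
  [/\ reflexive le, antisymmetric le, transitive le, total le &
      forall a b c : G, le a b -> le (a + c) (b + c)].

(* A valuation nu : K[x] -> G u {oo}, with nu f = oo iff f = 0.  We record
   only its (finite) values on nonzero polynomials; the value at 0 is oo by
   convention, so the axioms are stated for nonzero arguments (the ones
   involving 0 are automatic for oo). *)
Definition is_valuation (K : fieldType) (G : zmodType) (le : rel G)
    (nu : {poly K} -> G) : Prop :=
  (forall f g : {poly K}, f != 0 -> g != 0 -> nu (f * g) = nu f + nu g) /\
  (forall f g : {poly K}, f != 0 -> g != 0 -> f + g != 0 ->
      le (nu f) (nu (f + g)) || le (nu g) (nu (f + g))).

(* Elements of the divisible hull G (x) Q represented as fractions a / m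
   (m > 0), compared by cross-multiplication. *)
Definition frac_le (G : zmodType) (le : rel G) (x y : G * nat) : bool :=
  le (x.1 *+ y.2) (y.1 *+ x.2).
Definition frac_eq (G : zmodType) (le : rel G) (x y : G * nat) : bool :=
  frac_le le x y && frac_le le y x.
Definition frac_max (G : zmodType) (le : rel G) (x y : G * nat) : G * nat :=
  if frac_le le x y then y else x.

(* epsilon(f) = max { (nu f - nu (d_k f)) / k | 1 <= k <= deg f, d_k f != 0 },
   with d_k = nderivn k the Hasse derivative (p^`N(k)). *)
Definition epsilon (K : fieldType) (G : zmodType) (le : rel G)
    (nu : {poly K} -> G) (f : {poly K}) : G * nat :=
  let d := (size f).-1 in
  foldl (frac_max le) (nu f - nu (nderivn d f), d)
    [seq (nu f - nu (nderivn k f), k) | k <- iota 1 d & nderivn k f != 0].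

(* Main.v *)
Require Import Defs.
From mathcomp Require Import all_boot all_order all_algebra.
Set Implicit Arguments. Unset Strict Implicit. Unset Printing Implicit Defensive.
Import GRing.Theory.
Local Open Scope ring_scope.
From mathcomp Require Import ring.
Lemma nderivnMX (R : comNzRingType) (r : {poly R}) k :
  (r * 'X)^`N(k.+1) = r^`N(k.+1) * 'X + r^`N(k).
Proof. by have := nderivnMXaddC k r 0; rewrite addr0 addrC. Qed.

Lemma nderivnM (R : comNzRingType) (p q : {poly R}) k :
  (p * q)^`N(k) = \sum_(i < k.+1) p^`N(i) * q^`N(k - i).
Proof.
elim/poly_ind: q k => [|q c IH] k.
  by rewrite mulr0 linear0 big1 // => i _; rewrite linear0 mulr0.
case: k => [|k].
  by rewrite big_ord1 !nderivn0.
rewrite mulrDr mulrA nderivnD nderivnMX !IH.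
rewrite [p * c%:P]mulrC mul_polyC nderivnZ -mul_polyC.
rewrite !(@big_ord_recr _ _ _ k.+1) /= !subnn !nderivn0.
rewrite [X in _ = X + _](eq_bigr (fun i : 'I_k.+1 => p^`N(i) * q^`N(k - i) + p^`N(i) * q^`N(k.+1 - i) * 'X)); last first.
  move=> i _; have hi : (i <= k)%N by rewrite -ltnS.
  rewrite subSn //.
  by rewrite nderivnMXaddC mulrDr mulrA.
rewrite big_split /= -mulr_suml.
ring.
Qed.
Section Ord.
Variables (G : zmodType) (le : rel G).
Hypothesis hG : ordered_abelian_group le.

Lemma le_refl a : le a a. Proof. by case: hG => r. Qed.
Lemma le_trans a b c : le a b -> le b c -> le a c.
Proof. by case: hG => _ _ t _ _; apply: t. Qed.
Lemma le_anti a b : le a b -> le b a -> a = b.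
Proof. by case: hG => _ an _ _ _ h1 h2; apply: an; rewrite h1 h2. Qed.
Lemma le_total a b : le a b || le b a.
Proof. by case: hG => _ _ _ t _; apply: t. Qed.
Lemma le_addr a b c : le a b -> le (a + c) (b + c).
Proof. by case: hG => _ _ _ _ h; apply: h. Qed.
Lemma le_addl a b c : le a b -> le (c + a) (c + b).
Proof. by rewrite ![c + _]addrC; apply: le_addr. Qed.
Lemma leD a b c d : le a b -> le c d -> le (a + c) (b + d).
Proof. move=> h1 h2; apply: le_trans (le_addr c h1) (le_addl b h2). Qed.
Lemma le_addr_cancel a b c : le (a + c) (b + c) -> le a b.
Proof. by move=> h; have := le_addr (- c) h; rewrite !addrK. Qed.
Lemma lt_le a b : ~~ le b a -> le a b.
Proof. by move=> h; have := le_total a b; rewrite (negbTE h) orbF. Qed.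
Lemma ltD a b c d : ~~ le b a -> le c d -> ~~ le (b + d) (a + c).
Proof.
move=> h1 h2; apply: contra h1 => h3.
apply: (@le_addr_cancel _ _ c); exact: le_trans (le_addl b h2) h3.
Qed.
Lemma lerMn n a b : le a b -> le (a *+ n) (b *+ n).
Proof. by move=> h; elim: n => [|n IH]; rewrite ?le_refl // !mulrS; apply: leD. Qed.
Lemma ltrMn n a b : (0 < n)%N -> ~~ le b a -> ~~ le (b *+ n) (a *+ n).
Proof.
case: n => // n _ h; elim: n => [|n IH]; first by rewrite !mulr1n.
by rewrite mulrS [a *+ _]mulrS; apply: ltD => //; apply/lt_le.
Qed.
Lemma lerMn_cancel n a b : (0 < n)%N -> le (a *+ n) (b *+ n) -> le a b.
Proof.
move=> n0 h; case: (boolP (le a b)) => // /(ltrMn n0) h'.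
by rewrite h in h'.
Qed.
Lemma mulrn_inj n (a b : G) : (0 < n)%N -> a *+ n = b *+ n -> a = b.
Proof.
move=> n0 e; apply: le_anti; by apply: (lerMn_cancel n0); rewrite e le_refl.
Qed.

Lemma frac_le_trans x y z : (0 < y.2)%N -> frac_le le x y -> frac_le le y z -> frac_le le x z.
Proof.
rewrite /frac_le => y0 h1 h2; apply: (lerMn_cancel y0).
rewrite mulrnAC; apply: le_trans (lerMn z.2 h1) _.
rewrite [y.1 *+ _ *+ _]mulrnAC [z.1 *+ _ *+ _]mulrnAC.
exact: lerMn.
Qed.
Lemma frac_le_total x y : frac_le le x y || frac_le le y x.
Proof. exact: le_total. Qed.
Lemma frac_le_refl x : frac_le le x x. Proof. exact: le_refl. Qed.
Lemma frac_max_ge x y : frac_le le x (frac_max le x y) /\ frac_le le y (frac_max le x y).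
Proof.
rewrite /frac_max; case: ifP => h; split=> //; rewrite ?frac_le_refl //.
by have := frac_le_total x y; rewrite h.
Qed.

Lemma fold_max s l : all (fun z => 0 < z.2)%N (s :: l) ->
  foldl (frac_max le) s l \in s :: l /\
  forall z, z \in s :: l -> frac_le le z (foldl (frac_max le) s l).
Proof.
elim: l s => [|x l IH] s /=.
  by move=> _; split; rewrite ?mem_head // => z; rewrite inE => /eqP->; apply: frac_le_refl.
case/and3P=> s0 x0 l0.
have m0 : (0 < (frac_max le s x).2)%N by rewrite /frac_max; case: ifP.
have [IH1 IH2] := IH (frac_max le s x) (introT andP (conj m0 l0)).
have [Hs Hx] := frac_max_ge s x.
split.
  move: IH1; rewrite !inE; case/orP=> [/eqP->|->]; last by rewrite !orbT.
  by rewrite /frac_max; case: ifP; rewrite eqxx ?orbT.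
move=> z; rewrite !inE => /or3P [/eqP->|/eqP->|zl].
- exact: frac_le_trans m0 Hs (IH2 _ (mem_head _ _)).
- exact: frac_le_trans m0 Hx (IH2 _ (mem_head _ _)).
- by apply: IH2; rewrite inE zl orbT.
Qed.
Variables (K : fieldType) (nu : {poly K} -> G).
Hypothesis hv : is_valuation le nu.

Lemma nuM f g : f != 0 -> g != 0 -> nu (f * g) = nu f + nu g.
Proof. by case: hv => h _; apply: h. Qed.
Lemma nuD f g : f != 0 -> g != 0 -> f + g != 0 ->
  le (nu f) (nu (f + g)) || le (nu g) (nu (f + g)).
Proof. by case: hv => _ h; apply: h. Qed.
Lemma nu1 : nu 1 = 0.
Proof.
have := nuM (oner_neq0 {poly K}) (oner_neq0 {poly K}).
by rewrite mulr1 => h; apply: (addrI (nu 1)); rewrite addr0 -h.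
Qed.
Lemma nuN h : h != 0 -> nu (- h) = nu h.
Proof.
move=> hn; have n1 : (-1 : {poly K}) != 0 by rewrite oppr_eq0 oner_neq0.
have e : nu (-1) = 0.
  apply: (@mulrn_inj 2) => //; rewrite mul0rn mulr2n -nuM //.
  by rewrite mulrNN mulr1 nu1.
by rewrite -mulN1r nuM // e add0r.
Qed.

Lemma closed_le (c d : G) m h1 h2 :
  (h1 == 0) || le c (nu h1 *+ m + d) -> (h2 == 0) || le c (nu h2 *+ m + d) ->
  (h1 + h2 == 0) || le c (nu (h1 + h2) *+ m + d).
Proof.
case: (eqVneq h1 0) => [->|n1] /=; first by rewrite add0r.
case: (eqVneq h2 0) => [->|n2] /=; first by rewrite addr0 orbC => ->.
case: (eqVneq (h1 + h2) 0) => [//|ns] /= c1 c2.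
case/orP: (nuD n1 n2 ns) => hh.
  by apply: le_trans c1 _; apply: le_addr; apply: lerMn.
by apply: le_trans c2 _; apply: le_addr; apply: lerMn.
Qed.

Lemma closed_lt (c : G) h1 h2 :
  (h1 == 0) || ~~ le (nu h1) c -> (h2 == 0) || ~~ le (nu h2) c ->
  (h1 + h2 == 0) || ~~ le (nu (h1 + h2)) c.
Proof.
case: (eqVneq h1 0) => [->|n1] /=; first by rewrite add0r.
case: (eqVneq h2 0) => [->|n2] /=; first by rewrite addr0 orbC => ->.
case: (eqVneq (h1 + h2) 0) => [//|ns] /= c1 c2.
case/orP: (nuD n1 n2 ns) => hh.
  by apply: contra c1 => h; apply: le_trans hh h.
by apply: contra c2 => h; apply: le_trans hh h.
Qed.

Lemma sum_strict t r : t != 0 -> (r == 0) || ~~ le (nu r) (nu t) ->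
  t + r != 0 /\ nu (t + r) = nu t.
Proof.
move=> tn; case: (eqVneq r 0) => [->|rn] /=; first by rewrite addr0.
move=> lt.
have sn : t + r != 0.
  apply/eqP=> e; move: lt; have -> : r = - t by apply/eqP; rewrite -addr_eq0 addrC e.
  by rewrite nuN // le_refl.
split=> //.
have rn' : - r != 0 by rewrite oppr_eq0.
have := nuD sn rn'; rewrite addrK nuN // (negbTE lt) orbF => /(_ tn) h1.
apply: le_anti => //.
case/orP: (nuD tn rn sn) => // h2.
by move: lt; rewrite (le_trans h2 h1).
Qed.

Lemma nderivn_neq0 (f : {poly K}) k : f^`N(k) != 0 -> (k < size f)%N.
Proof. by apply: contraR; rewrite -leqNgt => /nderivn_poly0 ->. Qed.

Lemma nderivn_lead (f : {poly K}) : f != 0 -> f^`N((size f).-1) != 0.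
Proof.
move=> fn; apply/eqP=> h; have := congr1 (fun p : {poly K} => p`_0) h.
rewrite /= coef_nderivn addn0 binn mulr1n coef0 -lead_coefE => /eqP.
by rewrite lead_coef_eq0 (negbTE fn).
Qed.

Lemma eps_props (f : {poly K}) : (1 < size f)%N ->
  [/\ (exists k, [/\ (0 < k)%N, (k < size f)%N, f^`N(k) != 0 &
        epsilon le nu f = (nu f - nu (f^`N(k)), k)]),
      (0 < (epsilon le nu f).2)%N &
      forall k, (0 < k)%N -> f^`N(k) != 0 ->
        frac_le le (nu f - nu (f^`N(k)), k) (epsilon le nu f)].
Proof.
move=> sf; have fn : f != 0 by rewrite -size_poly_gt0 (ltn_trans _ sf).
set d := (size f).-1.
have d0 : (0 < d)%N by rewrite /d -ltnS prednK // (ltn_trans _ sf).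
have dl : (d < size f)%N by rewrite /d prednK // (ltn_trans _ sf).
set l := [seq (nu f - nu (f^`N(k)), k) | k <- iota 1 d & f^`N(k) != 0].
have hall : all (fun z : G * nat => (0 < z.2)%N) ((nu f - nu (f^`N(d)), d) :: l).
  rewrite /= d0 /=; apply/allP=> z /mapP [k]; rewrite mem_filter mem_iota.
  by case/andP=> _ /andP [k1 _] ->.
have [Hm Hg] := fold_max hall.
have Hmem : forall z, z \in (nu f - nu (f^`N(d)), d) :: l ->
   exists k, [/\ (0 < k)%N, (k < size f)%N, f^`N(k) != 0 & z = (nu f - nu (f^`N(k)), k)].
  move=> z; rewrite inE => /orP [/eqP ->|].
    by exists d; split=> //; apply: nderivn_lead.
  case/mapP=> k; rewrite mem_filter mem_iota => /andP [nz /andP [k1 _]] ->.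
  by exists k; split=> //; apply: nderivn_neq0.
have [k [k0 ks kn ke]] := Hmem _ Hm.
rewrite /epsilon -/d -/l; split.
- by exists k; split.
- by rewrite ke.
- move=> j j0 jn; apply: Hg; rewrite inE; apply/orP; right.
  apply/mapP; exists j => //; rewrite mem_filter jn mem_iota j0 /= add1n.
  have s0 : (0 < size f)%N by apply: ltn_trans sf.
  by rewrite /d prednK // nderivn_neq0.
Qed.

Section EM.
Variables (e : G) (m : nat).
Hypothesis m0 : (0 < m)%N.
Definition Aw (h : {poly K}) i := nu (h^`N(i)) *+ m + e *+ i.
Definition bound (h : {poly K}) := forall i, h^`N(i) != 0 -> le (nu h *+ m) (Aw h i).

Lemma UB f g : f != 0 -> g != 0 -> bound f -> bound g -> bound (f * g).
Proof.
move=> fn gn bf bg k nz.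
have P : (((f * g)^`N(k)) == 0) || le (nu (f * g) *+ m + 0) (nu ((f * g)^`N(k)) *+ m + e *+ k).
  rewrite nderivnM; apply: (big_ind (fun h => (h == 0) || le (nu (f * g) *+ m + 0) (nu h *+ m + e *+ k))).
  - by rewrite eqxx.
  - by move=> h1 h2; apply: closed_le.
  move=> i _; set j := (k - i)%N.
  case: (eqVneq (f^`N(i)) 0) => [->|fi]; first by rewrite mul0r eqxx.
  case: (eqVneq (g^`N(j)) 0) => [->|gj]; first by rewrite mulr0 eqxx.
  apply/orP; right; rewrite addr0 !nuM // !mulrnDl.
  have -> : e *+ k = e *+ i + e *+ j by rewrite -mulrnDr /j subnKC // -ltnS.
  rewrite addrACA; apply: leD; [exact: bf | exact: bg].
by move: P; rewrite (negbTE nz) addr0.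
Qed.

Lemma LB f g i1 : f != 0 -> g != 0 -> bound f -> bound g ->
  (0 < i1)%N -> f^`N(i1) != 0 -> Aw f i1 = nu f *+ m ->
  exists k, [/\ (0 < k)%N, (f * g)^`N(k) != 0 & Aw (f * g) k = nu (f * g) *+ m].
Proof.
move=> fn gn bf bg i10 fi1 ti1.
pose Pf i := (f^`N(i) != 0) && (Aw f i == nu f *+ m).
pose Pg i := (g^`N(i) != 0) && (Aw g i == nu g *+ m).
have exf : exists i, Pf i by exists i1; rewrite /Pf fi1 ti1 eqxx.
have exg : exists i, Pg i by exists 0%N; rewrite /Pg /Aw nderivn0 gn mulr0n addr0 eqxx.
have bdf : forall i, Pf i -> (i <= size f)%N by move=> i /andP [/nderivn_neq0 /ltnW].
have bdg : forall i, Pg i -> (i <= size g)%N by move=> i /andP [/nderivn_neq0 /ltnW].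
case: (ex_maxnP exf bdf) => i0 /andP [fi0 /eqP ti0] maxf.
case: (ex_maxnP exg bdg) => j0 /andP [gj0 /eqP tj0] maxg.
have i1i0 : (i1 <= i0)%N by apply: maxf; rewrite /Pf fi1 ti1 eqxx.
set k := (i0 + j0)%N.
have k0 : (0 < k)%N by rewrite /k (leq_trans i10) // (leq_trans i1i0) // leq_addr.
exists k; rewrite nderivnM.
have i0k : (i0 < k.+1)%N by rewrite ltnS /k leq_addr.
rewrite (bigD1 (Ordinal i0k)) //= {1}/k addKn.
set t := f^`N(i0) * g^`N(j0).
have tn : t != 0 by rewrite mulf_neq0.
have nut : nu t *+ m + e *+ k = nu f *+ m + nu g *+ m.
  by rewrite /t nuM // mulrnDl /k mulrnDr addrACA -/(Aw f i0) -/(Aw g j0) ti0 tj0.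
have Q : let r := \sum_(i < k.+1 | i != Ordinal i0k) f^`N(i) * g^`N(k - i) in
    (r == 0) || ~~ le (nu r) (nu t).
  apply: (big_ind (fun h => (h == 0) || ~~ le (nu h) (nu t))).
  - by rewrite eqxx.
  - by move=> h1 h2; apply: closed_lt.
  move=> i ni; set j := (k - i)%N.
  case: (eqVneq (f^`N(i)) 0) => [->|fi]; first by rewrite mul0r eqxx.
  case: (eqVneq (g^`N(j)) 0) => [->|gj]; first by rewrite mulr0 eqxx.
  apply/orP; right; apply/negP => hle.
  have ek : k = (i + j)%N by rewrite /j subnKC // -ltnS.
  have := lerMn m hle; move/(le_addr (e *+ k)); rewrite nut nuM // mulrnDl.
  have -> : e *+ k = e *+ i + e *+ j by rewrite -mulrnDr -ek.
  rewrite addrACA -/(Aw f i) -/(Aw g j).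
  have ne : (i != i0 :> nat) by apply: contraNneq ni => h; apply/eqP/val_inj.
  case: (ltngtP i i0) => [lt|gt|eq]; last by rewrite eq eqxx in ne.
  - (* i < i0, so j > j0 *)
    have jj : (j0 < j)%N by rewrite -(ltn_add2l i) -ek /k ltn_add2r.
    have nPg : ~~ Pg j by apply/negP => /maxg; rewrite leqNgt jj.
    have strict : ~~ le (Aw g j) (nu g *+ m).
      apply: contra nPg => h; rewrite /Pg gj /=; apply/eqP/le_anti => //; exact: bg.
    apply/negP; rewrite addrC [X in le _ X]addrC; apply: ltD => //; exact: bf.
  - have nPf : ~~ Pf i by apply/negP => /maxf; rewrite leqNgt gt.
    have strict : ~~ le (Aw f i) (nu f *+ m).
      apply: contra nPf => h; rewrite /Pf fi /=; apply/eqP/le_anti => //; exact: bf.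
    apply/negP; apply: ltD => //; exact: bg.
have [sn se] := sum_strict tn Q.
split=> //.
by rewrite /Aw nderivnM (bigD1 (Ordinal i0k)) //= {1}/k addKn -/t se nut nuM // mulrnDl.
Qed.
End EM.
End Ord.

Lemma conv1 (G : zmodType) (le : rel G) (hG : ordered_abelian_group le) (x y z : G) m :
  le ((x - y) *+ m) z -> le (x *+ m) (y *+ m + z).
Proof. by rewrite mulrnBl => /(le_addr hG (y *+ m)); rewrite subrK addrC. Qed.
Lemma conv2 (G : zmodType) (le : rel G) (hG : ordered_abelian_group le) (x y z : G) m :
  le (x *+ m) (y *+ m + z) -> le ((x - y) *+ m) z.
Proof. by rewrite mulrnBl => /(le_addr hG (- (y *+ m))); rewrite addrAC subrr add0r. Qed.

Theorem mainTheorem5 (K : fieldType) (G : zmodType) (le : rel G)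
    (nu : {poly K} -> G) :
  ordered_abelian_group le -> is_valuation le nu ->
  forall f g : {poly K}, (1 < size f)%N -> (1 < size g)%N ->
    frac_eq le (epsilon le nu (f * g))
               (frac_max le (epsilon le nu f) (epsilon le nu g)).
Proof.
move=> hG hv f g sf sg.
have fn : f != 0 by rewrite -size_poly_gt0 (ltn_trans _ sf).
have gn : g != 0 by rewrite -size_poly_gt0 (ltn_trans _ sg).
have sfg : (1 < size (f * g)%R)%N.
  rewrite size_mul //; move: sf sg; case: (size f) => // a; case: (size g) => // b.
  by rewrite addnS /= => ha hb; apply: (leq_trans ha); rewrite leq_addr.
have [[kf [kf0 kfs kfn kfe]] pf gef] := eps_props hG nu sf.
have [[kg [kg0 kgs kgn kge]] pg geg] := eps_props hG nu sg.
have [[k [k0 ks kn ke]] pfg gefg] := eps_props hG nu sfg.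
have [Mf Mg] := frac_max_ge hG (epsilon le nu f) (epsilon le nu g).
have Mcase := erefl (frac_max le (epsilon le nu f) (epsilon le nu g)).
rewrite {2}/frac_max in Mcase.
move: Mf Mg Mcase; case: (frac_max le _ _) => e m Mf Mg Mcase.
have m0 : (0 < m)%N by move: Mcase; case: ifP => _ /(congr1 snd) /= ->.
have bnd : forall h : {poly K}, (1 < size h)%N -> frac_le le (epsilon le nu h) (e, m) ->
    bound le nu e m h.
  move=> h sh Mh i.
  have [_ ph geh] := eps_props hG nu sh.
  case: i => [|i] nz.
    by rewrite /Aw nderivn0 mulr0n addr0 le_refl.
  apply: conv1 => //; exact: (frac_le_trans hG ph (geh _ _ nz) Mh).
have bf := bnd f sf Mf.
have bg := bnd g sg Mg.
have bfg := UB hG hv fn gn bf bg.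
rewrite /frac_eq; apply/andP; split.
  by rewrite ke; apply: conv2 => //; apply: bfg.
have [k' [k'0 k'n tk']] :
    exists k, [/\ (0 < k)%N, (f * g)^`N(k) != 0 & Aw nu e m (f * g) k = nu (f * g) *+ m].
  move: Mcase; rewrite kfe kge; case: ifP => _ [He Hm]; subst e m.
  - rewrite mulrC; apply: (LB hG hv gn fn bg bf kg0 kgn) => //.
    by rewrite /Aw mulrnBl addrC subrK.
  - apply: (LB hG hv fn gn bf bg kf0 kfn) => //.
    by rewrite /Aw mulrnBl addrC subrK.
apply: (@frac_le_trans _ _ hG (e, m) (nu (f * g) - nu ((f * g)^`N(k')), k') _ k'0 _ (gefg _ k'0 k'n)).
rewrite /frac_le /= mulrnBl -tk' /Aw addrC addKr le_refl //.
Qed.
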